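(* Let $|\Psi\rangle$ be a normalized state of the periodic chain which is simultaneously an eigenvector of $H$ and of the one-site translation operator $U$. Fix indices $\alpha\neq\beta$ and define $$C(x)=\langle\Psi|\,J_\alpha(x)\,q_\beta(0)-q_\alpha(x)\,J_\beta(1)\,|\Psi\rangle .$$ Then $C(x)$ is independent of $x$, i.e. $C(x+1)=C(x)$ for all $x$.
   Context: Consider a spin chain of length $L$ with periodic boundary conditions, Hilbert space $(\mathbb{C}^N)^{\otimes L}$, sites labelled by $x\in\mathbb{Z}$ modulo $L$. Let $U$ be the unitary one-site translation operator. A local operator family $\mathcal{O}(x)$ is called translation covariant if $\mathcal{O}(x+1)=U\mathcal{O}(x)U^{-1}$. The chain has a Hamiltonian $H=\sum_{x=1}^L h(x)$ with $h(x)$ local and translation covariant, and a family of mutually commuting conserved charges $Q_\alpha=\sum_{x=1}^L q_\alpha(x)$, with $q_\alpha(x)$ translation covariant local operators (charge densities), $[Q_\alpha,Q_\beta]=0$, $[H,Q_\alpha]=0$, $[U,Q_\alpha]=[U,H]=0$. The current operators $J_\alpha(x)$ are translation covariant local operators defined by the continuity equation $$ i\,[H,q_\alpha(x)]=J_\alpha(x)-J_\alpha(x+1)\quad\text{for all }x.$$ *)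

(* Defs.v *)
From HB Require Import structures.
From mathcomp Require Import all_boot all_order all_algebra algC.
Set Implicit Arguments. Unset Strict Implicit. Unset Printing Implicit Defensive.
Import Order.TTheory GRing.Theory Num.Theory.
Local Open Scope ring_scope.

(* Basis configurations of the periodic chain (C^N)^{(x) L}: a value in
   {0..N-1} at each of the sites 0..L-1 (sites are taken modulo L). *)
Definition conf (N L : nat) := {ffun 'I_L -> 'I_N}.

(* Dimension of the Hilbert space, = N^L. Operators are 'M[algC]_(hdim N L),
   states are 'cV[algC]_(hdim N L), in the basis enum (conf N L). *)
Definition hdim (N L : nat) : nat := #|{: conf N L}|.

Definition shiftc (N L : nat) (s : conf N L) : conf N L :=
  [ffun j => s (ord_pred j)].

(* The one-site translation operator U : |s> |-> |shiftc s>.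
   With this convention, U O(x) U^{-1} acts on site x+1 when O(x) acts on x. *)
Definition transl (N L : nat) : 'M[algC]_(hdim N L) :=
  \matrix_(i, j) ((enum_val i == shiftc (enum_val j : conf N L))%:R).

Definition adj (m n : nat) (A : 'M[algC]_(m, n)) : 'M[algC]_(n, m) :=
  (map_mx (@Num.conj algC) A)^T.

Definition comm (n : nat) (A B : 'M[algC]_n) : 'M[algC]_n := A *m B - B *m A.

Definition expect (n : nat) (Psi : 'cV[algC]_n) (A : 'M[algC]_n) : algC :=
  (adj Psi *m A *m Psi) 0 0.

(* Main.v *)
Require Import Defs.
From HB Require Import structures.
From mathcomp Require Import all_boot all_order all_algebra algC.
From mathcomp Require Import ring.
Import Order.TTheory GRing.Theory Num.Theory.
Local Open Scope ring_scope.

Lemma shiftc_inj N L : injective (@shiftc N L).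
Proof.
move=> s t /ffunP E; apply/ffunP => j.
have := E (ordS j); rewrite !ffunE ordSK //.
Qed.

Lemma adj_transl N L : adj (transl N L) = (transl N L)^T.
Proof. by apply/matrixP=> i j; rewrite !mxE conjC_nat. Qed.

Lemma transl_tT N L : (transl N L)^T *m transl N L = 1%:M.
Proof.
apply/matrixP=> i j; rewrite !mxE.
rewrite (bigD1 (enum_rank (shiftc (enum_val i : conf N L)))) //=.
rewrite big1 ?addr0.
  rewrite !mxE enum_rankK eqxx mul1r.
  rewrite (inj_eq (@shiftc_inj N L)) (inj_eq enum_val_inj).
  by rewrite eq_sym.
move=> k nk; rewrite !mxE.
case: eqP => [e|]; last by rewrite mul0r.
by case/eqP: nk; rewrite -e enum_valK.
Qed.

Lemma adjM m n p (A : 'M[algC]_(m, n)) (B : 'M[algC]_(n, p)) :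
  adj (A *m B) = adj B *m adj A.
Proof. by rewrite /adj map_mxM trmx_mul. Qed.

Lemma adjZ m n (c : algC) (A : 'M[algC]_(m, n)) : adj (c *: A) = c^* *: adj A.
Proof. by apply/matrixP=> i j; rewrite !mxE rmorphM. Qed.

Lemma expectB n (Psi : 'cV[algC]_n) A B :
  expect Psi (A - B) = expect Psi A - expect Psi B.
Proof. by rewrite /expect mulmxBr mulmxBl !mxE. Qed.

Lemma expectZ n (Psi : 'cV[algC]_n) c A :
  expect Psi (c *: A) = c * expect Psi A.
Proof. by rewrite /expect -scalemxAr -scalemxAl !mxE. Qed.

Lemma one_entry (c d : algC) : c *: (1%:M : 'M[algC]_1) = d *: 1%:M -> c = d.
Proof. by move/matrixP/(_ 0 0); rewrite !mxE eqxx !mulr1. Qed.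

Theorem mainTheorem1
  (N L : nat) (Idx : Type)
  (h : int -> 'M[algC]_(hdim N L)) (H : 'M[algC]_(hdim N L))
  (q J : Idx -> int -> 'M[algC]_(hdim N L)) (Q : Idx -> 'M[algC]_(hdim N L))
  (Psi : 'cV[algC]_(hdim N L)) (alpha beta : Idx) :
  (0 < N)%N -> (0 < L)%N ->
  (* Hamiltonian: sum of translation covariant densities, self-adjoint *)
  (forall x, h (x + 1) = transl N L *m h x *m invmx (transl N L)) ->
  H = \sum_(1 <= x < L.+1) h (Posz x) ->
  adj H = H ->
  (* charges *)
  (forall a x, q a (x + 1) = transl N L *m q a x *m invmx (transl N L)) ->
  (forall a, Q a = \sum_(1 <= x < L.+1) q a (Posz x)) ->
  (forall a b, comm (Q a) (Q b) = 0) ->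
  (forall a, comm H (Q a) = 0) ->
  (forall a, comm (transl N L) (Q a) = 0) ->
  comm (transl N L) H = 0 ->
  (* currents: translation covariant, continuity equation *)
  (forall a x, J a (x + 1) = transl N L *m J a x *m invmx (transl N L)) ->
  (forall a x, 'i *: comm H (q a x) = J a x - J a (x + 1)) ->
  (* normalized simultaneous eigenvector of H and U *)
  adj Psi *m Psi = 1%:M ->
  (exists E : algC, H *m Psi = E *: Psi) ->
  (exists lam : algC, transl N L *m Psi = lam *: Psi) ->
  alpha <> beta ->
  forall x : int,
    expect Psi (J alpha (x + 1) *m q beta 0 - q alpha (x + 1) *m J beta 1)
    = expect Psi (J alpha x *m q beta 0 - q alpha x *m J beta 1).
Proof.
move=> _ _ _ _ Hsa hq _ _ _ _ _ hJ hcont norm [E HE] [lam UE] _ x.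
set T := transl N L.
have TtT : T^T *m T = 1%:M by exact: transl_tT.
have [_ Tu] := mulmx1_unit TtT.
have adjT : adj T^T = T by apply/matrixP => i j; rewrite /T !mxE conjC_nat.
have TTt : T *m T^T = 1%:M by exact: mulmx1C.
have invT : invmx T = T^T.
  by rewrite -[invmx T]mul1mx -TtT -mulmxA mulmxV // mulmx1.
have PsiH : adj Psi *m H = E^* *: adj Psi.
  by rewrite -{1}Hsa -adjM HE adjZ.
have Ereal : E^* = E.
  apply: one_entry; rewrite -norm.
  transitivity ((adj Psi *m H) *m Psi).
    by rewrite PsiH scalemxAl.
  by rewrite -mulmxA HE scalemxAr.
have ecomm : forall M, expect Psi (comm H M) = 0.
  move=> M; rewrite /comm expectB /expect !mulmxA PsiH -!mulmxA HE -scalemxAl.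
  by rewrite -!scalemxAr Ereal !mxE subrr.
have etr : forall M, expect Psi (T *m M *m invmx T) = expect Psi M.
  move=> M; rewrite invT.
  set W := T^T *m Psi.
  have PW : Psi = lam *: W by rewrite /W scalemxAr -UE mulmxA TtT mul1mx.
  have WW : adj W *m W = 1%:M.
    by rewrite /W adjM adjT mulmxA -(mulmxA _ T) TTt mulmx1.
  have ll : lam^* * lam = 1.
    apply: one_entry; rewrite scale1r -[RHS]norm {1 2}PW adjZ -scalemxAl -scalemxAr.
    by rewrite WW scalerA.
  rewrite /expect.
  have -> : adj Psi *m (T *m M *m T^T) *m Psi = adj W *m M *m W.
    by rewrite /W adjM adjT !mulmxA.
  by rewrite PW adjZ -scalemxAl -scalemxAr -scalemxAl scalerA mulrC ll scale1r.
have cprod : forall A B, comm H (A *m B) = comm H A *m B + A *m comm H B.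
  by move=> A B; rewrite /comm mulmxBl mulmxBr !mulmxA addrA subrK.
have key : expect Psi ((J alpha x - J alpha (x + 1)) *m q beta 0)
         = - expect Psi (q alpha x *m (J beta 0 - J beta (0 + 1))).
  rewrite -!hcont -scalemxAl -scalemxAr !expectZ.
  have := ecomm (q alpha x *m q beta 0); rewrite cprod.
  rewrite /expect mulmxDr mulmxDl mxE => /eqP; rewrite addr_eq0 => /eqP ->.
  by rewrite mulrN.
have tr : expect Psi (q alpha (x + 1) *m J beta 1) = expect Psi (q alpha x *m J beta 0).
  have -> : (1 : int) = 0 + 1 by [].
  rewrite hq hJ -/T -(etr (q alpha x *m J beta 0)).
  by rewrite !mulmxA mulmxKV.
move: key; rewrite !(mulmxBl, mulmxBr, expectB) add0r => key.
rewrite tr; move: key.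
set a := expect Psi (J alpha x *m q beta 0).
set a' := expect Psi (J alpha (x + 1) *m q beta 0).
set c := expect Psi (q alpha x *m J beta 0).
set d := expect Psi (q alpha x *m J beta 1).
move=> key.
have e : a' = a - (a - a') by rewrite opprB addrC subrK.
rewrite e key; ring.
Qed.
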